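(* The map $\omega'\mapsto\operatorname{Im}\mathcal A_{\omega'}$ is a bijection from $\operatorname{Sc}(V_{\widehat{\mathfrak h}}(1,0),\omega)$ onto $\operatorname{Reg}(\mathfrak h)$, the set of regular subspaces of $\mathfrak h$.
   Context: $\mathfrak h$ is a $d$-dimensional complex vector space with nondegenerate symmetric bilinear form $\langle\cdot,\cdot\rangle$ and fixed orthonormal basis $h_1,\dots,h_d$; $V_{\widehat{\mathfrak h}}(1,0)$ is the level 1 Heisenberg vertex algebra with $[h(m),h'(n)]=m\langle h,h'\rangle\delta_{m+n,0}$ and standard conformal vector $\omega=\frac12\sum_ih_i(-1)^2\mathbf 1$. For $\omega'=\sum_{i\le j}a_{ij}h_i(-1)h_j(-1)\mathbf 1+\sum_ib_ih_i(-2)\mathbf 1$, $\mathcal A_{\omega'}\in\operatorname{End}(\mathfrak h)$ has matrix (in basis $h_i$) the symmetric matrix with diagonal $2a_{ii}$ and off-diagonal entries $a_{ij}$. A subspace $\mathfrak h'\subseteq\mathfrak h$ is regular if $\langle\cdot,\cdot\rangle|_{\mathfrak h'}$ is nondegenerate. $\operatorname{Sc}(V,\omega)$ is the set of semi-conformal vectors (conformal vectors $\omega'$ of vertex operator subalgebras $(U,\omega')$ with $\omega_n|_U=\omega'_n|_U$ for $n\ge0$). *)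

(* Defs.v *)
From HB Require Import structures.
From mathcomp Require Import all_boot all_order all_algebra.
From mathcomp Require Import complex Rstruct.
Set Implicit Arguments. Unset Strict Implicit. Unset Printing Implicit Defensive.
Import Order.TTheory GRing.Theory Num.Theory.
Local Open Scope ring_scope.

Definition CC : numClosedFieldType := complex Rdefinitions.R.

Section VOA.
Variable K : fieldType.
Variable V : lmodType K.

(* Y u n v  is the mode  u_n v  (Y(u,z) = \sum_n u_n z^{-n-1}). *)
Definition vop := V -> int -> V -> V.

Definition binz (p : int) (i : nat) : K :=
  (\prod_(j < i) (p - (j : nat)%:Z)%:~R) / (i`!)%:R.

Definition subspaceP (U : V -> Prop) : Prop :=
  U 0 /\ (forall (a : K) u v, U u -> U v -> U (a *: u + v)).

Definition bilinear_vop (Y : vop) : Prop :=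
  (forall n v (a : K) u u', Y (a *: u + u') n v = a *: Y u n v + Y u' n v) /\
  (forall n u (a : K) v v', Y u n (a *: v + v') = a *: Y u n v + Y u n v').

(* (U, Y|_U, one) is a vertex algebra (U a subspace of V closed under all
   modes): truncation, vacuum, creation, and the Jacobi identity in its
   component (Borcherds) form, the sums being finite by truncation. *)
Definition is_va_on (U : V -> Prop) (Y : vop) (one : V) : Prop :=
  subspaceP U /\ U one /\
  (forall u v n, U u -> U v -> U (Y u n v)) /\
  (forall u v, U u -> U v -> exists N : int, forall n, N <= n -> Y u n v = 0) /\
  (forall v, U v -> Y one (-1) v = v /\ (forall n, n != -1 -> Y one n v = 0)) /\
  (forall u, U u -> Y u (-1) one = u /\ (forall n : int, 0 <= n -> Y u n one = 0)) /\
  (forall u v w, U u -> U v -> U w -> forall p q r : int,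
     exists N : nat, forall M : nat, (N <= M)%N ->
       \sum_(i < M) binz p i *: Y (Y u (r + (i : nat)%:Z) v) (p + q - (i : nat)%:Z) w =
       \sum_(i < M) ((-1) ^+ i * binz r i) *:
          (Y u (p + r - (i : nat)%:Z) (Y v (q + (i : nat)%:Z) w)
           - (-1) ^ r *: Y v (q + r - (i : nat)%:Z) (Y u (p + (i : nat)%:Z) w))).

(* (U, Y|_U, one, w) is a vertex operator algebra; L(n) = w_{n+1}. *)
Definition is_voa_on (U : V -> Prop) (Y : vop) (one w : V) : Prop :=
  is_va_on U Y one /\ U w /\
  (exists c : K, forall (m n : int) v, U v ->
     Y w (m + 1) (Y w (n + 1) v) - Y w (n + 1) (Y w (m + 1) v) =
     (m - n)%:~R *: Y w (m + n + 1) v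
     + (if m + n == 0 then ((m ^+ 3 - m)%:~R / 12%:R) * c else 0) *: v) /\
  Y w 1 w = 2%:R *: w /\
  (* L(-1)-derivative property: Y(L(-1)u, z) = d/dz Y(u, z) *)
  (forall u, U u -> forall (n : int) x, U x ->
     Y (Y w 0 u) n x = (- n)%:~R *: Y u (n - 1) x) /\
  (* U is the direct sum of the integer L(0)-eigenspaces U_(n) ... *)
  (forall v, U v -> exists (N : nat) (f : 'I_N -> V) (wt : 'I_N -> int),
      v = \sum_(i < N) f i /\ forall i, U (f i) /\ Y w 1 (f i) = (wt i)%:~R *: f i) /\
  (* ... each finite-dimensional ... *)
  (forall n : int, exists s : seq V, forall v, U v -> Y w 1 v = n%:~R *: v ->
      exists c : 'I_(size s) -> K, v = \sum_(i < size s) c i *: nth 0 s i) /\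
  (* ... and vanishing for n sufficiently negative. *)
  (exists N : int, forall (n : int) v, n < N -> U v -> Y w 1 v = n%:~R *: v -> v = 0).

Definition semi_conformal (Y : vop) (one w w' : V) : Prop :=
  exists U : V -> Prop, is_voa_on U Y one w' /\
    forall n : int, 0 <= n -> forall u, U u -> Y w n u = Y w' n u.

Variable d : nat.

Definition hmono (Y : vop) (one : V) (h : 'I_d -> V) (s : seq ('I_d * nat)) : V :=
  foldr (fun p x => Y (h p.1) (- (p.2.+1)%:Z) x) one s.

(* (V, Y, one, w) is the level-1 Heisenberg VOA V_{\hat h}(1,0) for
   h = K^d with the standard symmetric form, h_i = h i the orthonormal basis
   (h_i(n) = Y (h i) n), and w the standard conformal vector. *)
Definition heisenberg_voa (Y : vop) (one w : V) (h : 'I_d -> V) : Prop :=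
  bilinear_vop Y /\ is_voa_on (fun _ => True) Y one w /\ one != 0 /\
  (forall (i j : 'I_d) (m n : int) v,
     Y (h i) m (Y (h j) n v) - Y (h j) n (Y (h i) m v) =
     (if (i == j) && (m + n == 0) then m%:~R else 0) *: v) /\
  (forall v, exists (N : nat) (ms : 'I_N -> seq ('I_d * nat)) (c : 'I_N -> K),
     v = \sum_(k < N) c k *: hmono Y one h (ms k)) /\
  w = (2%:R)^-1 *: \sum_(i < d) Y (h i) (-1) (Y (h i) (-1) one).

Definition weight2_vec (Y : vop) (one : V) (h : 'I_d -> V)
    (a : 'M[K]_d) (b : 'rV[K]_d) : V :=
  \sum_(i < d) \sum_(j < d | (i <= j)%N) a i j *: Y (h i) (-1) (Y (h j) (-1) one)
  + \sum_(i < d) b 0 i *: Y (h i) (-2) one.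

(* matrix of A_{w'} in the basis h_i *)
Definition Amat (a : 'M[K]_d) : 'M[K]_d :=
  \matrix_(i, j) (if i == j then 2%:R * a i i else if (i < j)%N then a i j else a j i).

(* Im A_{w'} = W (subspaces of K^d as row spaces; the endomorphism with
   matrix A acts on coordinate row vectors by x |-> x *m A^T). *)
Definition imA_rel (Y : vop) (one : V) (h : 'I_d -> V) (w' : V) (W : 'M[K]_d) : Prop :=
  exists a b, w' = weight2_vec Y one h a b /\ (W == (Amat a)^T)%MS.

End VOA.

Definition regular_sub (K : fieldType) (d : nat) (W : 'M[K]_d) : Prop :=
  forall x : 'rV[K]_d, (x <= W)%MS ->
    (forall y : 'rV[K]_d, (y <= W)%MS -> x *m y^T = 0) -> x = 0.

(* Main.v *)
Require Import Defs.
From HB Require Import structures.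
From mathcomp Require Import all_boot all_order all_algebra.
From mathcomp Require Import complex Rstruct.
From mathcomp Require Import zify ring.
Unset Printing Implicit Defensive.
Import Order.TTheory GRing.Theory Num.Theory.
Local Open Scope ring_scope.

Section Heis.
Variables (d : nat) (V : lmodType CC) (Y : V -> int -> V -> V) (one w : V) (h : 'I_d -> V).
Hypothesis HV : heisenberg_voa Y one w h.

Lemma bilY : bilinear_vop Y. Proof. by case: HV. Qed.
Lemma voaV : is_voa_on (fun _ => True) Y one w. Proof. by case: HV => _ []. Qed.
Lemma one_neq0 : one != 0. Proof. by case: HV => _ [_ []]. Qed.
Lemma commH (i j : 'I_d) (m n : int) v :
  Y (h i) m (Y (h j) n v) = Y (h j) n (Y (h i) m v) +
     (if (i == j) && (m + n == 0) then m%:~R else 0) *: v.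
Proof. case: HV => _ [_ [_ [H _]]]; by rewrite -(H i j m n v) addrC subrK. Qed.
Lemma spanH v : exists (N : nat) (ms : 'I_N -> seq ('I_d * nat)) (c : 'I_N -> CC),
     v = \sum_(k < N) c k *: hmono Y one h (ms k).
Proof. by case: HV => _ [_ [_ [_ []]]]. Qed.
Lemma wdef : w = (2%:R)^-1 *: \sum_(i < d) Y (h i) (-1) (Y (h i) (-1) one).
Proof. by case: HV => _ [_ [_ [_ []]]]. Qed.

Lemma Y_linr u n a v v' : Y u n (a *: v + v') = a *: Y u n v + Y u n v'.
Proof. by case: bilY => _ ->. Qed.
Lemma Y_linl u u' n a v : Y (a *: u + u') n v = a *: Y u n v + Y u' n v.
Proof. by case: bilY => ->. Qed.

Lemma Y0r u n : Y u n 0 = 0.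
Proof.
have := Y_linr u n 1 0 0; rewrite addr0 !scale1r => H.
by have := congr1 (fun z => z - Y u n 0) H; rewrite subrr addrK => /esym H0; exact H0.
Qed.
Lemma Y0l v n : Y 0 n v = 0.
Proof.
have := Y_linl 0 0 n 1 v; rewrite addr0 !scale1r => H.
by have := congr1 (fun z => z - Y 0 n v) H; rewrite subrr addrK => /esym H0; exact H0.
Qed.
Lemma Y_scaler u n a v : Y u n (a *: v) = a *: Y u n v.
Proof. by rewrite -[a *: v]addr0 Y_linr Y0r addr0. Qed.
Lemma Y_scalel u n a v : Y (a *: u) n v = a *: Y u n v.
Proof. by have := Y_linl u 0 n a v; rewrite !addr0 Y0l addr0. Qed.
Lemma Y_addr u n v v' : Y u n (v + v') = Y u n v + Y u n v'.
Proof. by have := Y_linr u n 1 v v'; rewrite !scale1r. Qed.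
Lemma Y_addl u u' n v : Y (u + u') n v = Y u n v + Y u' n v.
Proof. by have := Y_linl u u' n 1 v; rewrite !scale1r. Qed.
Lemma Y_oppr u n v : Y u n (- v) = - Y u n v.
Proof. by rewrite -scaleN1r Y_scaler scaleN1r. Qed.
Lemma Y_oppl u n v : Y (- u) n v = - Y u n v.
Proof. by rewrite -scaleN1r Y_scalel scaleN1r. Qed.
Lemma Y_subr u n v v' : Y u n (v - v') = Y u n v - Y u n v'.
Proof. by rewrite Y_addr Y_oppr. Qed.
Lemma Y_subl u u' n v : Y (u - u') n v = Y u n v - Y u' n v.
Proof. by rewrite Y_addl Y_oppl. Qed.
Lemma Y_sumr u n I (r : seq I) (P : pred I) (F : I -> V) :
  Y u n (\sum_(i <- r | P i) F i) = \sum_(i <- r | P i) Y u n (F i).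
Proof. exact: (big_morph (Y u n) (Y_addr u n) (Y0r u n)). Qed.
Lemma Y_suml v n I (r : seq I) (P : pred I) (F : I -> V) :
  Y (\sum_(i <- r | P i) F i) n v = \sum_(i <- r | P i) Y (F i) n v.
Proof. exact: (big_morph (fun u => Y u n v) (fun x y => Y_addl x y n v) (Y0l v n)). Qed.

Lemma vaV : is_va_on (fun _ => True) Y one. Proof. by case: voaV. Qed.
Lemma jacY u v x (p q r : int) : exists N : nat, forall M : nat, (N <= M)%N ->
       \sum_(i < M) binz CC p i *: Y (Y u (r + (i : nat)%:Z) v) (p + q - (i : nat)%:Z) x =
       \sum_(i < M) ((-1) ^+ i * binz CC r i) *:
          (Y u (p + r - (i : nat)%:Z) (Y v (q + (i : nat)%:Z) x)
           - (-1) ^ r *: Y v (q + r - (i : nat)%:Z) (Y u (p + (i : nat)%:Z) x)).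
Proof. by case: vaV => _ [_ [_ [_ [_ [_ J]]]]]; apply: J. Qed.
Lemma creat u : Y u (-1) one = u /\ (forall n : int, 0 <= n -> Y u n one = 0).
Proof. by case: vaV => _ [_ [_ [_ [_ [C _]]]]]; apply: C. Qed.
Lemma vacY v : Y one (-1) v = v /\ (forall n, n != -1 -> Y one n v = 0).
Proof. by case: vaV => _ [_ [_ [_ [C _]]]]; apply: C. Qed.
Lemma truncY u v : exists N : int, forall n, N <= n -> Y u n v = 0.
Proof. by case: vaV => _ [_ [_ [C _]]]; apply: C. Qed.
Lemma Y_one0 u (n : int) : 0 <= n -> Y u n one = 0.
Proof. by case: (creat u) => _; apply. Qed.
Lemma Y_onem1 u : Y u (-1) one = u.
Proof. by case: (creat u). Qed.

Lemma sum_trunc (F : nat -> V) K0 M : (K0 <= M)%N ->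
  (forall i, (K0 <= i)%N -> F i = 0) -> \sum_(i < M) F i = \sum_(i < K0) F i.
Proof.
move=> le FK; rewrite -!(big_mkord xpredT) (big_cat_nat (leq0n K0) le) /=.
rewrite [X in _ + X]big1_seq ?addr0 // => i /andP[_]; rewrite mem_index_iota => /andP[? _].
exact: FK.
Qed.

Lemma binz_p0 p : binz CC p 0 = 1.
Proof. by rewrite /binz big_ord0 divr1. Qed.
Lemma binz_0i i : (0 < i)%N -> binz CC 0 i = 0.
Proof.
case: i => // i _; rewrite /binz big_ord_recl /= sub0r.
by rewrite (_ : (- (0%N)%:Z) = 0) // mul0r mul0r.
Qed.
Lemma binz_p1 p : binz CC p 1 = p%:~R.
Proof. by rewrite /binz big_ord1 /= subr0 divr1. Qed.

Lemma commY u v x p q (K0 : nat) : (forall i : nat, (K0 <= i)%N -> Y u i%:Z v = 0) ->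
  Y u p (Y v q x) - Y v q (Y u p x) = \sum_(i < K0) binz CC p i *: Y (Y u (i : nat)%:Z v) (p + q - (i : nat)%:Z) x.
Proof.
move=> HK; have [N HN] := jacY u v x p q 0.
have := HN (maxn N K0).+1 (leq_trans (leq_maxl N K0) (leqnSn _)).
rewrite (sum_trunc (fun i : nat => binz CC p i *: Y (Y u (0 + i%:Z) v) (p + q - i%:Z) x) K0 (maxn N K0).+1 (leq_trans (leq_maxr N K0) (leqnSn _))); last first.
  by move=> i Hi; rewrite add0r HK // Y0l scaler0.
rewrite (sum_trunc (fun i : nat => ((-1) ^+ i * binz CC 0 i) *:
          (Y u (p + 0 - i%:Z) (Y v (q + i%:Z) x)
           - (-1) ^ 0 *: Y v (q + 0 - i%:Z) (Y u (p + i%:Z) x))) 1 (maxn N K0).+1); last 2 first.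
- by [].
- by move=> i Hi; rewrite binz_0i // mulr0 scale0r.
rewrite big_ord1 /= binz_p0 mulr1 scale1r !addr0 expr0z scale1r.
move=> <-; apply: eq_bigr => i _; by rewrite add0r.
Qed.

Lemma sum_delta (T : nmodType) (k : 'I_d) (F : 'I_d -> T) :
  \sum_(j < d) (if k == j then F j else 0) = F k.
Proof. by rewrite -big_mkcond /= (big_pred1 k) // => j; rewrite /= eq_sym. Qed.
Lemma sum_delta' (T : nmodType) (k : 'I_d) (F : 'I_d -> T) :
  \sum_(j < d) (if j == k then F j else 0) = F k.
Proof. by rewrite -big_mkcond /= (big_pred1 k). Qed.

Definition H (b : 'rV[CC]_d) : V := \sum_(j < d) b 0 j *: h j.
Definition q (i j : 'I_d) : V := Y (h i) (-1) (Y (h j) (-1) one).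
Definition Q (C : 'M[CC]_d) : V := \sum_(i < d) \sum_(j < d) C i j *: q i j.
Definition R (b : 'rV[CC]_d) : V := \sum_(i < d) b 0 i *: Y (h i) (-2) one.

Lemma H_add a b : H (a + b) = H a + H b.
Proof. by rewrite /H -big_split; apply: eq_bigr => j _; rewrite mxE scalerDl. Qed.
Lemma H_scale c a : H (c *: a) = c *: H a.
Proof. by rewrite /H scaler_sumr; apply: eq_bigr => j _; rewrite mxE scalerA. Qed.
Lemma H_0 : H 0 = 0.
Proof. by rewrite /H big1 // => j _; rewrite mxE scale0r. Qed.
Lemma H_sum I (r : seq I) (P : pred I) (F : I -> 'rV[CC]_d) :
  H (\sum_(i <- r | P i) F i) = \sum_(i <- r | P i) H (F i).
Proof. exact: (big_morph H H_add H_0). Qed.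
Lemma H_mul (u : 'rV[CC]_d) (A : 'M[CC]_d) : H (u *m A) = \sum_k u 0 k *: H (row k A).
Proof. by rewrite mulmx_sum_row H_sum; apply: eq_bigr => k _; rewrite H_scale. Qed.
Lemma H_row1 k : H (row k 1%:M) = h k.
Proof.
rewrite /H (eq_bigr (fun j => if k == j then h j else 0)) ?sum_delta // => j _.
by rewrite mxE mxE; case: eqP => _; rewrite ?scale1r ?scale0r.
Qed.
Lemma Y_H b n x : Y (H b) n x = \sum_k b 0 k *: Y (h k) n x.
Proof. by rewrite /H Y_suml; apply: eq_bigr => k _; rewrite Y_scalel. Qed.

Lemma hk_h k j (t : int) : 0 <= t ->
  Y (h k) t (h j) = (if (k == j) && (t == 1) then 1 else 0) *: one.
Proof.
move=> t0; rewrite -{1}(Y_onem1 (h j)) commH Y_one0 // Y0r add0r.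
by rewrite subr_eq0; case: (k == j); case: (t == 1) / eqP => // ->.
Qed.
Lemma hk_H k b (t : int) : 0 <= t ->
  Y (h k) t (H b) = (if t == 1 then b 0 k else 0) *: one.
Proof.
move=> t0; rewrite /H Y_sumr.
rewrite (eq_bigr (fun j => if k == j then (if t == 1 then b 0 j else 0) *: one else 0)).
  by rewrite sum_delta.
move=> j _; rewrite Y_scaler hk_h // scalerA.
by case: (k == j); case: (t == 1); rewrite /= ?mulr1 ?mulr0 ?scale0r.
Qed.

Lemma scaler_if (a : CC) (b : bool) (x : V) : a *: (if b then x else 0) = if b then a *: x else 0.
Proof. by case: b; rewrite ?scaler0. Qed.

Lemma q_sym i j : q i j = q j i.
Proof. by rewrite /q commH andbF scale0r addr0. Qed.
Lemma q_h i j : q i j = Y (h i) (-1) (h j).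
Proof. by rewrite /q Y_onem1. Qed.

Lemma hk_q k (t : int) i j : 0 <= t ->
  Y (h k) t (q i j) = if t == 1 then (if k == j then h i else 0) + (if k == i then h j else 0) else 0.
Proof.
move=> t0; rewrite q_h commH hk_h // Y_scaler Y_onem1 subr_eq0.
by case: (t == 1) / eqP => [->|_]; case: (k == j); case: (k == i);
  rewrite /= ?scale1r ?scale0r ?addr0 ?add0r.
Qed.

Lemma Q_add C D : Q (C + D) = Q C + Q D.
Proof.
rewrite /Q -big_split; apply: eq_bigr => i _; rewrite -big_split; apply: eq_bigr => j _.
by rewrite mxE scalerDl.
Qed.
Lemma Q_scale c C : Q (c *: C) = c *: Q C.
Proof.
rewrite /Q scaler_sumr; apply: eq_bigr => i _; rewrite scaler_sumr; apply: eq_bigr => j _.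
by rewrite mxE scalerA.
Qed.
Lemma Q_tr C : Q C^T = Q C.
Proof.
rewrite /Q exchange_big; apply: eq_bigr => i _; apply: eq_bigr => j _.
by rewrite mxE q_sym.
Qed.
Lemma Q_row C : Q C = \sum_i Y (h i) (-1) (H (row i C)).
Proof.
apply: eq_bigr => i _; rewrite /H Y_sumr; apply: eq_bigr => j _.
by rewrite Y_scaler mxE q_h.
Qed.

Lemma hk_Q k (t : int) C : 0 <= t ->
  Y (h k) t (Q C) = if t == 1 then H (row k (C + C^T)) else 0.
Proof.
move=> t0; rewrite /Q Y_sumr.
rewrite (eq_bigr (fun i => \sum_j C i j *: Y (h k) t (q i j))); last first.
  by move=> i _; rewrite Y_sumr; apply: eq_bigr => j _; rewrite Y_scaler.
case: ifP => t1; last first.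
  by rewrite big1 // => i _; rewrite big1 // => j _; rewrite hk_q // t1 scaler0.
rewrite (eq_bigr (fun i => (C i k *: h i) + (if k == i then \sum_j C i j *: h j else 0))); last first.
  move=> i _; rewrite (eq_bigr (fun j => (if k == j then C i j *: h i else 0) +
                                  (if k == i then C i j *: h j else 0))); last first.
    by move=> j _; rewrite hk_q // t1 scalerDr !scaler_if.
  rewrite big_split /= sum_delta; congr (_ + _).
  by case: (k == i) => //=; rewrite big1.
rewrite big_split /= sum_delta /H -big_split /=; apply: eq_bigr => j _.
by rewrite !mxE scalerDl addrC.
Qed.

Lemma Hb_Q b (t : int) C : 0 <= t ->
  Y (H b) t (Q C) = if t == 1 then H (b *m (C + C^T)) else 0.
Proof.
move=> t0; rewrite Y_H H_mul; case: ifP => t1.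
  by apply: eq_bigr => k _; rewrite hk_Q // t1.
by rewrite big1 // => k _; rewrite hk_Q // t1 scaler0.
Qed.

Lemma extract_Q k l C : Y (h l) 1 (Y (h k) 1 (Q C)) = (C + C^T) k l *: one.
Proof. by rewrite hk_Q // eqxx hk_H // eqxx mxE. Qed.

Definition Sm (C : 'M[CC]_d) := C + C^T.

Lemma two_neq0 : (2%:R : CC) != 0.
Proof. by rewrite pnatr_eq0. Qed.
Lemma half_half : (2%:R^-1 : CC) + 2%:R^-1 = 1.
Proof. by rewrite -mulr2n -(mulr_natr (2%:R^-1) 2) mulVf ?two_neq0. Qed.

Lemma Sm_half1 : Sm (2%:R^-1 *: 1%:M) = 1%:M.
Proof. by rewrite /Sm linearZ /= trmx1 -scalerDl half_half scale1r. Qed.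

Lemma w_Q : w = Q (2%:R^-1 *: 1%:M).
Proof.
rewrite wdef Q_scale; congr (_ *: _); rewrite /Q; apply: eq_bigr => i _.
rewrite (eq_bigr (fun j => if i == j then q i j else 0)) ?sum_delta //.
by move=> j _; rewrite mxE; case: eqP => _; rewrite ?scale1r ?scale0r.
Qed.

Lemma commQ b (m j : int) x C :
  Y (H b) m (Y (Q C) j x) - Y (Q C) j (Y (H b) m x) =
  m%:~R *: Y (H (b *m Sm C)) (m + j - 1) x.
Proof.
rewrite (commY _ _ _ _ _ 2); last first.
  by move=> i Hi; rewrite Hb_Q //; case: i Hi => [|[|i]].
rewrite !big_ord_recl big_ord0 /= addr0 Hb_Q // Y0l scaler0 add0r Hb_Q //=.
by rewrite addr0 (_ : bump 0 0 = 1%N) // binz_p1.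
Qed.

Lemma commQh k (m j : int) x C :
  Y (h k) m (Y (Q C) j x) - Y (Q C) j (Y (h k) m x) =
  m%:~R *: Y (H (row k (Sm C))) (m + j - 1) x.
Proof. by rewrite -H_row1 commQ -row_mul mul1mx. Qed.

Lemma L0_h k (m : int) x :
  Y w 1 (Y (h k) m x) = Y (h k) m (Y w 1 x) - m%:~R *: Y (h k) m x.
Proof.
have := commQh k m 1 x (2%:R^-1 *: 1%:M); rewrite -w_Q Sm_half1 H_row1 addrK => <-.
by rewrite opprB addrC subrK.
Qed.

Definition wt (s : seq ('I_d * nat)) := sumn [seq p.2.+1 | p <- s].

Lemma L0_hmono s : Y w 1 (hmono Y one h s) = (wt s)%:R *: hmono Y one h s.
Proof.
elim: s => [|[i n] s IH] /=; first by rewrite Y_one0 // scale0r.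
rewrite L0_h IH Y_scaler /wt /= -/(wt s).
by rewrite -scalerBl mulrNz opprK natrD addrC.
Qed.

Lemma L_sum I (r : seq I) (F : I -> V) : Y w 1 (\sum_(i <- r) F i) = \sum_(i <- r) Y w 1 (F i).
Proof. exact: Y_sumr. Qed.

Lemma eig_sep (I : eqType) (r : seq I) (e : I -> CC) (lam : CC) (F : I -> V) :
  (forall i, i \in r -> Y w 1 (F i) = e i *: F i) -> (forall i, i \in r -> e i != lam) ->
  Y w 1 (\sum_(i <- r) F i) = lam *: \sum_(i <- r) F i -> \sum_(i <- r) F i = 0.
Proof.
elim: r F => [|i0 t IH] F HF He HL; first by rewrite big_nil.
rewrite big_cons in HL *.
set X := \sum_(i <- t) F i in HL *.
have HX : \sum_(i <- t) (e i - e i0) *: F i = (lam - e i0) *: (F i0 + X).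
  rewrite (eq_big_seq (fun i => Y w 1 (F i) - e i0 *: F i)); last first.
    by move=> i it; rewrite scalerBl HF // inE it orbT.
  rewrite sumrB -L_sum -scaler_sumr -/X.
  move: HL; rewrite Y_addr HF ?mem_head // => HL.
  have -> : Y w 1 X = lam *: (F i0 + X) - e i0 *: F i0 by rewrite -HL addrC addKr.
  by rewrite scalerBl [e i0 *: (_ + _)]scalerDr opprD addrA.
have : \sum_(i <- t) (e i - e i0) *: F i = 0.
  apply: IH.
  - move=> i it; rewrite Y_scaler HF ?inE ?it ?orbT // !scalerA mulrC //.
  - by move=> i it; apply: He; rewrite inE it orbT.
  rewrite HX Y_scaler Y_addr HF ?mem_head //.
  suff -> : Y w 1 X = lam *: (F i0 + X) - e i0 *: F i0.
    by rewrite [e i0 *: F i0 + _]addrC subrK !scalerA mulrC.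
  move: HL; rewrite Y_addr HF ?mem_head // => HL.
  by rewrite -HL [_ + Y w 1 X]addrC addrK.
rewrite HX => /eqP; rewrite scaler_eq0 subr_eq0 => /orP[/eqP E|/eqP //].
by move: (He i0 (mem_head _ _)); rewrite -E eqxx.
Qed.

Lemma R_add a b : R (a + b) = R a + R b.
Proof. by rewrite /R -big_split; apply: eq_bigr => j _; rewrite mxE scalerDl. Qed.
Lemma R_scale c a : R (c *: a) = c *: R a.
Proof. by rewrite /R scaler_sumr; apply: eq_bigr => j _; rewrite mxE scalerA. Qed.
Lemma R_0 : R 0 = 0.
Proof. by rewrite /R big1 // => j _; rewrite mxE scale0r. Qed.
Lemma Q_0 : Q 0 = 0.
Proof. by rewrite /Q big1 // => i _; rewrite big1 // => j _; rewrite mxE scale0r. Qed.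

Lemma Q_delta i j : Q (delta_mx i j) = q i j.
Proof.
rewrite /Q (eq_bigr (fun k => if k == i then q i j else 0)) ?sum_delta' //.
move=> k _; rewrite (eq_bigr (fun l => if l == j then (k == i)%:R *: q k l else 0)).
  by rewrite sum_delta'; case: eqP => [->|_]; rewrite ?scale1r ?scale0r.
by move=> l _; rewrite mxE; case: eqP => _; case: eqP => _; rewrite ?scale1r ?scale0r.
Qed.
Lemma R_delta i : R (delta_mx 0 i) = Y (h i) (-2) one.
Proof.
rewrite /R (eq_bigr (fun k => if k == i then Y (h i) (-2) one else 0)) ?sum_delta' //.
by move=> k _; rewrite mxE eqxx /=; case: eqP => [->|_]; rewrite ?scale1r ?scale0r.
Qed.

Definition S2 (v : V) := exists B b, v = Q B + R b.
Lemma S2_0 : S2 0. Proof. by exists 0, 0; rewrite Q_0 R_0 addr0. Qed.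
Lemma S2_add u v : S2 u -> S2 v -> S2 (u + v).
Proof.
move=> [B [b ->]] [C [c ->]]; exists (B + C), (b + c).
by rewrite Q_add R_add addrACA.
Qed.
Lemma S2_scale a v : S2 v -> S2 (a *: v).
Proof. by move=> [B [b ->]]; exists (a *: B), (a *: b); rewrite Q_scale R_scale scalerDr. Qed.

Lemma hmono_wt2 s : wt s = 2%N -> S2 (hmono Y one h s).
Proof.
case: s => [|[i n] s] //=; rewrite /wt /=.
case: n => [|[|n]] //=.
- case: s => [|[j m] [|p s]] //=; rewrite /wt /=; case: m => // _.
  by exists (delta_mx i j), 0; rewrite R_0 addr0 Q_delta.
- case: s => //= _; exists 0, (delta_mx 0 i); rewrite Q_0 add0r R_delta //.
Qed.

Lemma span_wt2 v : Y w 1 v = 2%:R *: v -> S2 v.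
Proof.
move=> Hv; have [N [ms [c Ev]]] := spanH v.
rewrite (bigID (fun k => wt (ms k) == 2%N)) /= in Ev.
set P1 := \sum_(k < N | _) _ in Ev; set P2 := \sum_(k < N | _) _ in Ev.
have S2P1 : S2 P1.
  apply: (big_ind S2 S2_0 S2_add) => k /eqP Hk; exact/S2_scale/hmono_wt2.
have LP1 : Y w 1 P1 = 2%:R *: P1.
  rewrite /P1 Y_sumr scaler_sumr; apply: eq_bigr => k /eqP Hk.
  by rewrite Y_scaler L0_hmono Hk scalerA mulrC -scalerA.
have P20 : P2 = 0.
  rewrite /P2 -big_filter; apply: (@eig_sep _ _ (fun k => (wt (ms k))%:R) 2%:R).
  - by move=> k _; rewrite Y_scaler L0_hmono scalerA mulrC -scalerA.
  - by move=> k; rewrite mem_filter => /andP[Hk _]; rewrite eqr_nat.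
  rewrite big_filter -/P2.
  have -> : P2 = v - P1 by rewrite Ev [P1 + _]addrC addrK.
  by rewrite Y_subr Hv LP1 scalerBr.
by rewrite Ev P20 addr0.
Qed.

Lemma scal_one_inj (a b : CC) : a *: one = b *: one -> a = b.
Proof.
move/eqP; rewrite -subr_eq0 -scalerBl scaler_eq0 (negbTE one_neq0) orbF subr_eq0.
by move/eqP.
Qed.

Lemma H_inj b : H b = 0 -> b = 0.
Proof.
move=> Hb; apply/rowP => k; rewrite mxE.
by apply: scal_one_inj; rewrite -(hk_H k b 1) //= Hb Y0r scale0r.
Qed.

Lemma extract_eq X Z : Q X = Q Z -> Sm X = Sm Z.
Proof.
move=> E; apply/matrixP => k l; apply: scal_one_inj.
by rewrite /Sm -!extract_Q E.
Qed.

Lemma QY_h D (j : int) i (m : int) y :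
  Y (Q D) j (Y (h i) m y) = Y (h i) m (Y (Q D) j y) - m%:~R *: Y (H (row i (Sm D))) (m + j - 1) y.
Proof. by rewrite -commQh opprB addrC subrK. Qed.

Lemma Q1_h D k : Y (Q D) 1 (h k) = H (row k (Sm D)).
Proof.
rewrite -{1}(Y_onem1 (h k)) QY_h Y_one0 // Y0r sub0r.
by rewrite (_ : (-1 + 1 - 1 : int) = -1) // Y_onem1 mulrNz scaleNr opprK scale1r.
Qed.
Lemma Q1_H D b : Y (Q D) 1 (H b) = H (b *m Sm D).
Proof. by rewrite {1}/H Y_sumr H_mul; apply: eq_bigr => k _; rewrite Y_scaler Q1_h. Qed.

Lemma H_Y_h b k (t : int) : 0 <= t ->
  Y (H b) t (h k) = (if t == 1 then b 0 k else 0) *: one.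
Proof.
move=> t0; rewrite Y_H (eq_bigr (fun l => if k == l then (if t == 1 then b 0 k else 0) *: one else 0)).
  by rewrite sum_delta.
move=> l _; rewrite hk_h // scalerA; case: eqP => [->|/eqP]; first by rewrite eqxx /=; case: (t == 1); rewrite ?mulr1 ?mulr0.
by rewrite eq_sym => /negbTE ->; rewrite /= mulr0 scale0r.
Qed.

Lemma Qj_h D (j : int) k : 2 <= j -> Y (Q D) j (h k) = 0.
Proof.
move=> j2; rewrite -{1}(Y_onem1 (h k)) QY_h Y_one0 ?(le_trans _ j2) // Y0r sub0r.
rewrite Y_one0 ?scaler0 ?oppr0 //.
by lia.
Qed.

Lemma Qj_q D (j : int) i k : 2 <= j ->
  Y (Q D) j (q i k) = (if j == 3 then Sm D i k else 0) *: one.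
Proof.
move=> j2; rewrite q_h QY_h Qj_h // Y0r sub0r mulrNz scaleNr opprK scale1r.
rewrite H_Y_h; last by rewrite (_ : (-1 + j - 1 : int) = j - 2) ?subr_ge0 //; lia.
rewrite (_ : (-1 + j - 1 : int) = j - 2); last by lia.
by rewrite mxE (_ : (j - 2 == 1) = (j == 3)) //; apply/eqP/eqP => E; lia.
Qed.

Lemma Qj_Q D (j : int) C : 2 <= j ->
  Y (Q D) j (Q C) = (if j == 3 then \sum_i \sum_k C i k * Sm D i k else 0) *: one.
Proof.
move=> j2; rewrite {1}/Q Y_sumr; case: ifP => j3; last first.
  rewrite scale0r big1 // => i _; rewrite Y_sumr big1 // => k _.
  by rewrite Y_scaler Qj_q // j3 scale0r scaler0.
rewrite scaler_suml; apply: eq_bigr => i _.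
rewrite Y_sumr scaler_suml; apply: eq_bigr => k _.
by rewrite Y_scaler Qj_q // j3 scalerA.
Qed.

Lemma R2 D b : Y (Q D) 2 (R b) = 2%:R *: H (b *m Sm D).
Proof.
rewrite /R Y_sumr H_mul scaler_sumr; apply: eq_bigr => i _.
rewrite Y_scaler QY_h Y_one0 // Y0r sub0r.
rewrite (_ : (-2 + 2 - 1 : int) = -1) // Y_onem1 scalerA mulrC -scalerA.
by congr (_ *: _); rewrite -scaleNr -mulrNz.
Qed.

Lemma Q2sum (A C : 'M[CC]_d) : \sum_i Y (H (row i A)) (-1) (H (row i C)) = Q (A^T *m C).
Proof.
have E : forall a c, Y (H a) (-1) (H c) = \sum_k \sum_l (a 0 k * c 0 l) *: q k l.
  move=> a c; rewrite Y_H; apply: eq_bigr => k _.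
  rewrite {1}/H Y_sumr scaler_sumr; apply: eq_bigr => l _.
  by rewrite Y_scaler !scalerA q_h mulrC.
rewrite (eq_bigr _ (fun i _ => E _ _)) /Q exchange_big /=.
apply: eq_bigr => k _; rewrite exchange_big /=; apply: eq_bigr => l _.
by rewrite !mxE scaler_suml; apply: eq_bigr => i _; rewrite !mxE.
Qed.

Lemma QQ1 (B C : 'M[CC]_d) : Y (Q B) 1 (Q C) = Q (C *m Sm B) + Q ((Sm B)^T *m C).
Proof.
rewrite (Q_row C) Y_sumr -Q2sum (Q_row (C *m _)) -big_split /=.
apply: eq_bigr => i _; rewrite QY_h Q1_H row_mul.
rewrite (_ : (-1 + 1 - 1 : int) = -1) //.
by rewrite mulrNz scaleNr opprK scale1r.
Qed.

Lemma Sm_tr B : (Sm B)^T = Sm B.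
Proof. by rewrite /Sm linearD /= trmxK addrC. Qed.

Lemma SmQQ B : Sm (B *m Sm B + (Sm B)^T *m B) = 2%:R *: (Sm B *m Sm B).
Proof.
rewrite Sm_tr scaler_nat mulr2n.
have SmE X : Sm X = X + X^T by [].
have e1 : Sm B *m Sm B = B *m Sm B + B^T *m Sm B := mulmxDl B B^T (Sm B).
have e2 : Sm B *m Sm B = Sm B *m B + Sm B *m B^T := mulmxDr (Sm B) B B^T.
rewrite (SmE (B *m Sm B + Sm B *m B)) [(_ + _)^T]linearD /= !trmx_mul Sm_tr {1}e1 e2.
by rewrite [(Sm B *m B^T) + _]addrC addrACA.
Qed.

Lemma sc_form w' : semi_conformal Y one w w' -> exists B, w' = Q B /\ Sm B *m Sm B = Sm B.
Proof.
case=> U [[[_ [Uone [_ [_ [_ [creU _]]]]]] [Uw [[c vir] [wt2 _]]]] agree].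
have Y2 : Y w' 2 w' = 0.
  have := vir 1 (-2) one Uone.
  rewrite (_ : (1 + 1 : int) = 2) // (_ : (-2 + 1 : int) = -1) // (_ : (1 + -2 + 1 : int) = 0) //.
  rewrite (_ : (1 + -2 == 0 :> int) = false) // scale0r addr0.
  have [Cm1 C0] := creU w' Uw.
  by rewrite Cm1 C0 // C0 // Y0r subr0 scaler0.
have L1 : Y w 1 w' = 2%:R *: w' by rewrite agree.
have [B [b Ew]] := span_wt2 w' L1.
have b0 : b = 0.
  have : Y w 2 w' = 0 by rewrite agree.
  rewrite Ew Y_addr w_Q Qj_Q // R2 Sm_half1 mulmx1 /= scale0r add0r => /eqP.
  by rewrite scaler_eq0 (negbTE two_neq0) /= => /eqP; exact: H_inj.
exists B; split; first by rewrite Ew b0 R_0 addr0.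
have := wt2; rewrite Ew b0 R_0 addr0 QQ1 -Q_add -Q_scale => /extract_eq.
rewrite SmQQ /Sm linearZ /= -scalerDr -/(Sm B).
by move/(scalerI two_neq0).
Qed.

Definition Ua (a : 'M[CC]_d) : 'M[CC]_d := \matrix_(i, j) if (i <= j)%N then a i j else 0.

Lemma w2_Q a b : weight2_vec Y one h a b = Q (Ua a) + R b.
Proof.
rewrite /weight2_vec; congr (_ + _); apply: eq_bigr => i _.
rewrite big_mkcond /=; apply: eq_bigr => j _; rewrite mxE /q.
by case: ifP; rewrite ?scale0r.
Qed.

Lemma Amat_Sm a : Amat a = Sm (Ua a).
Proof.
apply/matrixP => i j; rewrite !mxE.
case: (ltngtP i j) => [lt|gt|/val_inj eq].
- have -> : (i == j) = false by apply/eqP => E; move: lt; rewrite E ltnn.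
  by rewrite addr0.
- have -> : (i == j) = false by apply/eqP => E; move: gt; rewrite E ltnn.
  by rewrite add0r.
- by rewrite eq eqxx mulr_natl mulr2n.
Qed.

Lemma Q_Sm X Z : Sm X = Sm Z -> Q X = Q Z.
Proof.
have E : forall M, Q M = 2%:R^-1 *: Q (Sm M).
  by move=> M; rewrite /Sm Q_add Q_tr scalerDr -scalerDl half_half scale1r.
by move=> e; rewrite (E X) (E Z) e.
Qed.

Lemma from_B B : exists a, Sm (Ua a) = Sm B.
Proof.
exists (\matrix_(i, j) if (i < j)%N then B i j + B j i else if i == j then B i i else 0).
apply/matrixP => i j; rewrite !mxE.
case: (ltngtP i j) => [lt|gt|/val_inj eq].
- by rewrite addr0.
- by rewrite add0r addrC.
- by rewrite eq eqxx.
Qed.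

Lemma hk1_R k b : Y (h k) 1 (R b) = 0.
Proof.
rewrite /R Y_sumr big1 // => i _; rewrite Y_scaler commH Y_one0 // Y0r add0r.
by rewrite andbF scale0r scaler0.
Qed.

Lemma extract_QR X Z b c : Q X + R b = Q Z + R c -> Sm X = Sm Z.
Proof.
move=> E; apply/matrixP => k l; apply: scal_one_inj.
rewrite /Sm -!extract_Q.
have F : forall M b, Y (h l) 1 (Y (h k) 1 (Q M + R b)) = Y (h l) 1 (Y (h k) 1 (Q M)).
  by move=> M b'; rewrite Y_addr hk1_R addr0.
by rewrite -(F X b) -(F Z c) E.
Qed.

Lemma sym_idem_eq (S1 S2 : 'M[CC]_d) : S1^T = S1 -> S2^T = S2 ->
  S1 *m S1 = S1 -> S2 *m S2 = S2 -> (S1 <= S2)%MS -> (S2 <= S1)%MS -> S1 = S2.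
Proof.
move=> T1 T2 I1 I2 /submxP[D1 E1] /submxP[D2 E2].
have P12 : S1 *m S2 = S1 by rewrite {1}E1 -mulmxA I2 -E1.
have P21 : S2 *m S1 = S2 by rewrite {1}E2 -mulmxA I1 -E2.
by rewrite -T1 -{1}P12 trmx_mul T1 T2 P21.
Qed.

Lemma regular_idem (S : 'M[CC]_d) : S^T = S -> S *m S = S -> regular_sub S^T.
Proof.
move=> T I x; rewrite T => /submxP[z Ez] Horth.
have xS : x *m S = x by rewrite Ez -mulmxA I.
have xST : x *m S^T = 0.
  apply/matrixP => i k; rewrite (ord1 i) !mxE.
  have := Horth (row k S) (row_sub k S); move/matrixP/(_ 0 0); rewrite !mxE => E.
  by apply: (etrans _ E); apply: eq_bigr => j _; rewrite !mxE.
by rewrite -xS -T xST.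
Qed.

Lemma clause1 w' : semi_conformal Y one w w' ->
  exists W : 'M[CC]_d, imA_rel Y one h w' W /\ regular_sub W.
Proof.
move=> sc; have [B [EB I]] := sc_form _ sc; have [a Ea] := from_B B.
exists (Amat a)^T; split.
  exists a, 0; split; last by rewrite submx_refl.
  by rewrite w2_Q R_0 addr0 EB; apply: Q_Sm.
by rewrite Amat_Sm Ea; apply: regular_idem (Sm_tr B) I.
Qed.

Lemma clause2 w' (W1 W2 : 'M[CC]_d) :
  imA_rel Y one h w' W1 -> imA_rel Y one h w' W2 -> (W1 == W2)%MS.
Proof.
move=> [a1 [b1 [E1 H1]]] [a2 [b2 [E2 H2]]].
have eA : Amat a1 = Amat a2.
  by rewrite !Amat_Sm; apply: (extract_QR _ _ b1 b2); rewrite -!w2_Q -E1 -E2.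
rewrite eA in H1; case/andP: H1 => H1a H1b; case/andP: H2 => H2a H2b.
by apply/andP; split; apply: submx_trans; eauto.
Qed.

Lemma clause3 w1 w2 (W : 'M[CC]_d) : semi_conformal Y one w w1 ->
  semi_conformal Y one w w2 -> imA_rel Y one h w1 W -> imA_rel Y one h w2 W -> w1 = w2.
Proof.
move=> sc1 sc2 [a1 [b1 [E1 H1]]] [a2 [b2 [E2 H2]]].
have [B1 [EB1 I1]] := sc_form _ sc1; have [B2 [EB2 I2]] := sc_form _ sc2.
have e1 : Sm B1 = Amat a1.
  rewrite Amat_Sm; apply: (extract_QR _ _ 0 b1).
  by rewrite R_0 addr0 -EB1 -w2_Q.
have e2 : Sm B2 = Amat a2.
  rewrite Amat_Sm; apply: (extract_QR _ _ 0 b2).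
  by rewrite R_0 addr0 -EB2 -w2_Q.
rewrite -e1 Sm_tr in H1; rewrite -e2 Sm_tr in H2.
case/andP: H1 => H1a H1b; case/andP: H2 => H2a H2b.
have eS : Sm B1 = Sm B2.
  apply: sym_idem_eq (Sm_tr _) (Sm_tr _) I1 I2 _ _; apply: submx_trans; eauto.
by rewrite EB1 EB2; apply: Q_Sm.
Qed.

Lemma proj_aux r (Bw : 'M[CC]_(r, d)) : (Bw *m Bw^T) \in unitmx ->
  [/\ (Bw^T *m invmx (Bw *m Bw^T) *m Bw)^T = Bw^T *m invmx (Bw *m Bw^T) *m Bw,
      (Bw^T *m invmx (Bw *m Bw^T) *m Bw) *m (Bw^T *m invmx (Bw *m Bw^T) *m Bw)
         = Bw^T *m invmx (Bw *m Bw^T) *m Bw,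
      (Bw^T *m invmx (Bw *m Bw^T) *m Bw <= Bw)%MS &
      (Bw <= Bw^T *m invmx (Bw *m Bw^T) *m Bw)%MS].
Proof.
move=> Gu; have GT : (Bw *m Bw^T)^T = Bw *m Bw^T by rewrite trmx_mul trmxK.
split.
- by rewrite !trmx_mul trmxK trmx_inv GT mulmxA.
- by rewrite -!mulmxA (mulmxA Bw) (mulmxA (invmx _)) mulVmx // mul1mx.
- exact: submxMl.
- by apply/submxP; exists Bw; rewrite !mulmxA mulmxV // mul1mx.
Qed.

Lemma proj_exists (W : 'M[CC]_d) : regular_sub W ->
  exists P : 'M[CC]_d, [/\ P^T = P, P *m P = P & (W <= P)%MS && (P <= W)%MS].
Proof.
move=> reg.
have Gu : (row_base W *m (row_base W)^T) \in unitmx.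
  rewrite -row_free_unit; apply: inj_row_free => v vG.
  have x0 : v *m row_base W = 0.
    apply: reg; first by rewrite -(eq_row_base W) submxMl.
    move=> y; rewrite -(eq_row_base W) => /submxP[z ->].
    by rewrite trmx_mul mulmxA -(mulmxA v) vG mul0mx.
  by apply/eqP; rewrite -(mulmx_free_eq0 _ (row_base_free W)) x0.
have [T1 I1 S1 S2] := proj_aux _ _ Gu.
exists ((row_base W)^T *m invmx (row_base W *m (row_base W)^T) *m row_base W); split => //.
by apply/andP; split; rewrite -(eq_row_base W).
Qed.

Inductive Usp (P : 'M[CC]_d) : V -> Prop :=
 | U_one : Usp P one
 | U_lin a u v : Usp P u -> Usp P v -> Usp P (a *: u + v)
 | U_h (b : 'rV[CC]_d) (n : int) u : (b <= P)%MS -> Usp P u -> Usp P (Y (H b) n u).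

Arguments U_one {P}. Arguments U_lin {P} a {u v}. Arguments U_h {P} b n {u}.

Section USec.
Variable P : 'M[CC]_d.

Lemma U_0 : Usp P 0.
Proof. by have := U_lin (-1) U_one U_one; rewrite scaleN1r addNr. Qed.
Lemma U_add u v : Usp P u -> Usp P v -> Usp P (u + v).
Proof. by move=> Hu Hv; have := U_lin 1 Hu Hv; rewrite scale1r. Qed.
Lemma U_scale a u : Usp P u -> Usp P (a *: u).
Proof. by move=> Hu; have := U_lin a Hu U_0; rewrite addr0. Qed.
Lemma U_sub u v : Usp P u -> Usp P v -> Usp P (u - v).
Proof. by move=> Hu Hv; rewrite -scaleN1r addrC; apply: U_lin. Qed.
Lemma U_sum I (r : seq I) (F : I -> V) : (forall i, Usp P (F i)) -> Usp P (\sum_(i <- r) F i).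
Proof. by move=> HF; apply: (big_ind (Usp P) U_0 U_add) => i _. Qed.

Lemma U_clos u : Usp P u -> forall n v, Usp P v -> Usp P (Y u n v).
Proof.
elim=> {u} [|a u1 u2 _ IH1 _ IH2|b m u1 bP _ IH] n v Uv.
- case: (vacY v) => Em1 Eo; case: (n =P -1) => [->|/eqP ne]; first by rewrite Em1.
  by rewrite Eo //; apply: U_0.
- by rewrite Y_linl; apply: U_lin; [apply: IH1 | apply: IH2].
- have [N HN] := jacY (H b) u1 v 0 n m.
  have := HN N.+1 (leqnSn N).
  rewrite (sum_trunc (fun i : nat => binz CC 0 i *: Y (Y (H b) (m + i%:Z) u1) (0 + n - i%:Z) v) 1 N.+1) //; last first.
    by move=> i Hi; rewrite binz_0i // scale0r.
  rewrite big_ord1 /= binz_p0 scale1r addr0 add0r subr0 => ->.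
  apply: U_sum => i; apply: U_scale; apply: U_sub.
    by apply: U_h => //; apply: IH.
  by apply: U_scale; apply: IH => //; apply: U_h.
Qed.

Hypothesis PT : P^T = P.
Hypothesis PI : P *m P = P.

Definition Cm := 2%:R^-1 *: P.
Definition Dm := 2%:R^-1 *: (1%:M - P).
Definition wp := Q Cm.

Lemma Sm_C : Sm Cm = P.
Proof. by rewrite /Sm /Cm linearZ /= PT -scalerDl half_half scale1r. Qed.
Lemma Sm_D : Sm Dm = 1%:M - P.
Proof.
by rewrite /Sm /Dm [(_ *: _)^T]linearZ /= [(_ - _)^T]linearB /= trmx1 PT -scalerDl half_half scale1r.
Qed.
Lemma Q_sub A B : Q (A - B) = Q A - Q B.
Proof. by rewrite Q_add -[- B]scaleN1r Q_scale scaleN1r. Qed.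
Lemma w_wp : w - wp = Q Dm.
Proof. by rewrite w_Q /wp -Q_sub /Dm /Cm scalerBr. Qed.

Lemma bP_fix (b : 'rV[CC]_d) : (b <= P)%MS -> b *m P = b.
Proof. by case/submxP => z ->; rewrite -mulmxA PI. Qed.

Lemma kill u : Usp P u -> forall n : int, 0 <= n -> Y (Q Dm) n u = 0.
Proof.
elim=> {u} [|a u1 u2 _ IH1 _ IH2|b m u1 bP _ IH] n n0.
- by rewrite Y_one0.
- by rewrite Y_linr IH1 // IH2 // scaler0 addr0.
- have := commQ b m n u1 Dm; rewrite Sm_D mulmxBr mulmx1 bP_fix // subrr H_0 Y0l scaler0.
  by rewrite IH // Y0r sub0r => /eqP; rewrite oppr_eq0 => /eqP.
Qed.

Lemma agree u (n : int) : Usp P u -> 0 <= n -> Y w n u = Y wp n u.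
Proof. by move=> Uu n0; apply/eqP; rewrite -subr_eq0 -Y_subl w_wp kill. Qed.

Lemma U_wp : Usp P wp.
Proof.
rewrite /wp /Cm Q_scale -[Q P]/(Q P) -[in Q P]PI -[in Q (P *m P)]PT -Q2sum; apply: U_scale; apply: U_sum => i.
apply: U_h; first exact: row_sub.
rewrite PT -(Y_onem1 (H (row i P))); apply: U_h; [exact: row_sub | exact: U_one].
Qed.

Lemma wp1 : Y wp 1 wp = 2%:R *: wp.
Proof.
by rewrite /wp QQ1 Sm_C PT /Cm -scalemxAl -scalemxAr PI scaler_nat mulr2n.
Qed.

Lemma derivV u (n : int) x : Y (Y w 0 u) n x = (- n)%:~R *: Y u (n - 1) x.
Proof. by case: voaV => _ [_ [_ [_ [D _]]]]; apply: D. Qed.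

Definition tC := \sum_i \sum_k Cm i k * Sm Cm i k.

Lemma wpj (j : int) : 2 <= j -> Y wp j wp = (if j == 3 then tC else 0) *: one.
Proof. by move=> j2; rewrite /wp Qj_Q. Qed.

Lemma vir_wp (m n : int) v : Usp P v ->
  Y wp (m + 1) (Y wp (n + 1) v) - Y wp (n + 1) (Y wp (m + 1) v) =
  (m - n)%:~R *: Y wp (m + n + 1) v
  + (if m + n == 0 then ((m ^+ 3 - m)%:~R / 12%:R) * (2%:R * tC) else 0) *: v.
Proof.
move=> Uv; rewrite (commY _ _ _ _ _ 4); last first.
  move=> i Hi; rewrite wpj; last by lia.
  by rewrite (_ : (i%:Z == 3) = false) ?scale0r ?Y0l //; apply/eqP => E; lia.
rewrite !big_ord_recl big_ord0 addr0 /=.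
have b1 : bump 0 0 = 1%N by []. have b2 : bump 0 (bump 0 0) = 2%N by [].
have b3 : bump 0 (bump 0 (bump 0 0)) = 3%N by [].
rewrite b3 b2 b1 -(agree wp 0 U_wp) // derivV wp1 !wpj //= scale0r Y0l scaler0 addr0.
rewrite Y_scalel Y_scalel binz_p0 binz_p1 scale1r.
have e1 : m + 1 + (n + 1) - 1 = m + n + 1 by lia.
have e3 : m + 1 + (n + 1) - 3 = m + n - 1 by lia.
rewrite e1 ?e1 e3 !scalerA add0r addrA -scalerDl.
have eZ : (- (m + 1 + (n + 1)))%:~R + (m + 1)%:~R * 2%:R = (m - n)%:~R :> CC.
  rewrite [2%:R]pmulrn -intrM -intrD; congr (_%:~R); lia.
rewrite eZ; congr (_ + _).
case: ifP => mn; last first.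
  rewrite scale0r (proj2 (vacY v)) ?scaler0 //; apply/eqP => E; move/eqP: mn; lia.
have -> : m + n - 1 = -1 by lia.
rewrite (proj1 (vacY v)); congr (_ *: _).
rewrite /binz !big_ord_recl big_ord0 /= mulr1.
rewrite (_ : bump 0 (bump 0 0) = 2%N) // (_ : bump 0 0 = 1%N) // (_ : 3`! = 6%N) //.
rewrite !intrB !intrD !exprS expr0 !intrM mulr1.
by field.
Qed.

Lemma L0_H b (m : int) x :
  Y w 1 (Y (H b) m x) = Y (H b) m (Y w 1 x) - m%:~R *: Y (H b) m x.
Proof.
have := commQ b m 1 x (2%:R^-1 *: 1%:M); rewrite -w_Q Sm_half1 mulmx1 addrK => <-.
by rewrite opprB addrC subrK.
Qed.

Lemma grad_U u : Usp P u -> exists s : seq (V * int), u = \sum_(p <- s) p.1 /\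
  (forall p, p \in s -> Usp P p.1 /\ Y w 1 p.1 = p.2%:~R *: p.1).
Proof.
elim=> {u} [|a u1 u2 _ [s1 [E1 H1]] _ [s2 [E2 H2]]|b m u1 bP _ [s1 [E1 H1]]].
- exists [:: (one, 0)]; split; first by rewrite big_seq1.
  move=> p; rewrite inE => /eqP -> /=; split; first exact: U_one.
  by rewrite Y_one0 // scale0r.
- exists ([seq (a *: p.1, p.2) | p <- s1] ++ s2); split.
    by rewrite big_cat big_map /= E1 E2 scaler_sumr.
  move=> p; rewrite mem_cat => /orP[/mapP[p' p's1 ->]|/H2 //] /=.
  have [U1 L1] := H1 p' p's1; split; first exact: U_scale.
  by rewrite Y_scaler L1 !scalerA mulrC.
- exists [seq (Y (H b) m p.1, p.2 - m) | p <- s1]; split.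
    by rewrite big_map E1 Y_sumr.
  move=> p /mapP[p' p's1 ->] /=; have [U1 L1] := H1 p' p's1; split.
    exact: U_h.
  by rewrite L0_H L1 Y_scaler intrB scalerBl.
Qed.

Lemma sc_wp : semi_conformal Y one w wp.
Proof.
exists (Usp P); split; last by move=> n n0 u Uu; apply: agree.
split; last split; last split; last split; last split; last split; last split.
- rewrite /is_va_on /subspaceP; split.
  + split; first exact: U_0.
    by move=> a u v Uu Uv; apply: U_lin.
  + split; first exact: U_one.
    split; first by move=> u v n Uu Uv; apply: U_clos.
    split; first by move=> u v _ _; apply: truncY.
    split; first by move=> v _; apply: vacY.
    split; first by move=> u _; apply: creat.
    move=> u v x _ _ _ p q r; exact: jacY.
- exact: U_wp.
- by exists (2%:R * tC) => m n v Uv; apply: vir_wp.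
- exact: wp1.
- by move=> u Uu n x Ux; rewrite -(agree u 0 Uu) // derivV.
- move=> v Uv; have [s [E Hs]] := grad_U _ Uv.
  exists (size s), (fun i => (nth (0, 0) s i).1), (fun i => (nth (0, 0) s i).2); split.
    by rewrite E (big_nth (0, 0)) big_mkord.
  move=> i; have [U1 L1] := Hs _ (mem_nth (0, 0) (ltn_ord i)); split => //.
  by rewrite -agree.
- move=> n; case: voaV => _ [_ [_ [_ [_ [_ [F _]]]]]].
  have [s Hs] := F n; exists s => v Uv Ev; apply: Hs => //.
  by rewrite agree.
- case: voaV => _ [_ [_ [_ [_ [_ [_ [N L]]]]]]].
  exists N => n v nN Uv Ev; apply: (L n v nN) => //.
  by rewrite agree.
Qed.
End USec.

Lemma clause4 (W : 'M[CC]_d) : regular_sub W ->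
  exists w', semi_conformal Y one w w' /\ imA_rel Y one h w' W.
Proof.
move=> reg; have [P [PT PI eW]] := proj_exists _ reg.
have [a Ea] := from_B (Cm P).
exists (wp P); split; first exact: sc_wp.
exists a, 0; split.
  by rewrite w2_Q R_0 addr0 /wp; apply: Q_Sm; rewrite Ea.
by rewrite Amat_Sm Ea Sm_C // PT.
Qed.
End Heis.

Theorem corollary3p3 (d : nat) (V : lmodType CC) (Y : V -> int -> V -> V)
    (one w : V) (h : 'I_d -> V) :
  heisenberg_voa Y one w h ->
  [/\ (* the map is defined on Sc and lands in Reg(h) *)
      (forall w', semi_conformal Y one w w' ->
         exists W : 'M[CC]_d, imA_rel Y one h w' W /\ regular_sub W),
      (* it is well defined *)
      (forall w' (W1 W2 : 'M[CC]_d), semi_conformal Y one w w' ->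
         imA_rel Y one h w' W1 -> imA_rel Y one h w' W2 -> (W1 == W2)%MS),
      (* injective *)
      (forall w1 w2 (W : 'M[CC]_d), semi_conformal Y one w w1 ->
         semi_conformal Y one w w2 ->
         imA_rel Y one h w1 W -> imA_rel Y one h w2 W -> w1 = w2) &
      (* onto Reg(h) *)
      (forall W : 'M[CC]_d, regular_sub W ->
         exists w', semi_conformal Y one w w' /\ imA_rel Y one h w' W)].
Proof.
move=> HV; split.
- exact: clause1.
- by move=> w' W1 W2 _; apply: (clause2 _ _ _ _ _ _ HV).
- exact: (clause3 _ _ _ _ _ _ HV).
- exact: (clause4 _ _ _ _ _ _ HV).
Qed.
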